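(* Let $a>0$, $b>0$, let $p\in\mathbb{N}$, and let $t>1$. Then \[ a\gamma + b\ln p + a\psi(t) - b\psi_p(t) > 0 . \]
   Context: $\gamma$ denotes the Euler–Mascheroni constant and $\psi(t)=\Gamma'(t)/\Gamma(t)$ is the digamma function for $t>0$, where $\Gamma$ is Euler's Gamma function. For $p\in\mathbb{N}$ and $t>0$, the $p$-Gamma function is $\Gamma_p(t)=\frac{p!\,p^t}{t(t+1)\cdots(t+p)}$, and $\psi_p(t)=\frac{d}{dt}\ln\Gamma_p(t)=\Gamma_p'(t)/\Gamma_p(t)$. *)

(* Defs.v *)
From Stdlib Require Import Reals.
From Coquelicot Require Import Coquelicot.
Open Scope R_scope.

Definition Gamma (t : R) : R :=
  RInt_gen (fun x => Rpower x (t - 1) * exp (- x))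
           (at_right 0) (Rbar_locally p_infty).

Definition digamma (t : R) : R := Derive Gamma t / Gamma t.

Definition euler_gamma : R :=
  real (Lim_seq (fun n => sum_f_R0 (fun k => / INR (S k)) (pred n) - ln (INR n))).

Definition Gamma_p (p : nat) (t : R) : R :=
  INR (Factorial.fact p) * Rpower (INR p) t / prod_f_R0 (fun k => t + INR k) p.

Definition psi_p (p : nat) (t : R) : R := Derive (fun s => ln (Gamma_p p s)) t.

(* Main.v *)
Require Import Defs.
From Stdlib Require Import Reals Lra Lia.
From Coquelicot Require Import Coquelicot.
Open Scope R_scope.

Lemma ln_le_sub1 x : 0 < x -> ln x <= x - 1.
Proof.
  intros Hx. pose proof (exp_ineq1_le (x-1)).
  rewrite <- (ln_exp (x-1)). apply ln_le; lra.
Qed.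

Lemma ln_diff_bounds u v : 0 < u -> u <= v -> (v - u)/v <= ln v - ln u <= (v-u)/u.
Proof.
  intros Hu Huv. split.
  - pose proof (ln_le_sub1 (u/v)). rewrite ln_div in H by lra.
    assert (u/v - 1 = -((v-u)/v)) by (field; lra).
    assert (0 < u/v) by (apply Rdiv_lt_0_compat; lra). lra.
  - pose proof (ln_le_sub1 (v/u)). rewrite ln_div in H by lra.
    assert (v/u - 1 = ((v-u)/u)) by (field; lra).
    assert (0 < v/u) by (apply Rdiv_lt_0_compat; lra). lra.
Qed.

Lemma ln_0 : ln 0 = 0.
Proof. unfold ln. destruct (Rlt_dec 0 0) as [h|h]; [exfalso; lra | reflexivity]. Qed.

Lemma exp_pow_n x n : exp x ^ n = exp (INR n * x).
Proof.
  induction n. simpl. rewrite Rmult_0_l, exp_0. auto.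
  rewrite S_INR. simpl pow. rewrite IHn, <- exp_plus. f_equal. ring.
Qed.

Lemma bernoulli y n : 0 <= y <= 1 -> 1 - INR n * y <= (1 - y)^n.
Proof.
  intros Hy. induction n. simpl; lra.
  rewrite S_INR. simpl pow.
  assert (0 <= INR n) by apply pos_INR.
  assert (0 <= (1-y)^n) by (apply pow_le; lra).
  nra.
Qed.

Definition vE (n : nat) := sum_f_R0 (fun k => / INR (S k)) (pred n) - ln (INR n).

Lemma vE_decr n : vE (S n) <= vE n.
Proof.
  unfold vE. destruct n.
  - simpl. rewrite ln_0, ln_1. lra.
  - cbn [pred]. rewrite tech5.
    replace (INR (S (S n))) with (INR (S n) + 1) by (rewrite (S_INR (S n)); ring).
    assert (0 < INR (S n)) by (apply lt_0_INR; lia).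
    pose proof (ln_diff_bounds (INR (S n)) (INR (S n) + 1) H ltac:(lra)).
    replace (INR (S n) + 1 - INR (S n)) with 1 in H0 by ring.
    unfold Rdiv in H0. lra.
Qed.

Lemma harm_ge_ln m : ln (INR (S (S m))) <= sum_f_R0 (fun k => / INR (S k)) m.
Proof.
  induction m.
  - simpl. pose proof (ln_le_sub1 2). replace (1+1) with 2 by ring. lra.
  - rewrite tech5.
    replace (INR (S (S (S m)))) with (INR (S (S m)) + 1) by (rewrite (S_INR (S (S m))); ring).
    assert (0 < INR (S (S m))) by (apply lt_0_INR; lia).
    pose proof (ln_diff_bounds (INR (S (S m))) (INR (S (S m)) + 1) H ltac:(lra)).
    replace (INR (S (S m)) + 1 - INR (S (S m))) with 1 in H0 by ring.
    unfold Rdiv in H0. lra.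
Qed.

Lemma vE_ge0 n : 0 <= vE n.
Proof.
  unfold vE. destruct n.
  - simpl. rewrite ln_0. lra.
  - cbn [pred]. pose proof (harm_ge_ln n).
    assert (0 < INR (S n)) by (apply lt_0_INR; lia).
    pose proof (ln_le (INR (S n)) (INR (S (S n))) H0 ltac:(rewrite (S_INR (S n)); lra)). lra.
Qed.

Lemma vE_lim : is_lim_seq vE euler_gamma.
Proof.
  assert (ex_finite_lim_seq vE) by (apply (ex_finite_lim_seq_decr vE 0); [apply vE_decr | apply vE_ge0]).
  pose proof (Lim_seq_correct' _ H).
  unfold euler_gamma. fold vE. exact H0.
Qed.

Lemma prod_pos m s : 0 < s -> 0 < prod_f_R0 (fun k => s + INR k) m.
Proof.
  intros Hs. induction m. simpl. lra.
  cbn [prod_f_R0]. apply Rmult_lt_0_compat; auto. pose proof (pos_INR (S m)). lra.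
Qed.

Lemma ln_prod m s : 0 < s ->
  ln (prod_f_R0 (fun k => s + INR k) m) = sum_f_R0 (fun k => ln (s + INR k)) m.
Proof.
  intros Hs. induction m. reflexivity.
  cbn [prod_f_R0]. rewrite tech5. rewrite ln_mult. rewrite IHm. reflexivity.
  apply prod_pos; auto. pose proof (pos_INR (S m)). lra.
Qed.

Lemma ln_Rpower x s : 0 < x -> ln (Rpower x s) = s * ln x.
Proof. intros. unfold Rpower. apply ln_exp. Qed.

Lemma Rpower_pos x s : 0 < Rpower x s.
Proof. unfold Rpower. apply exp_pos. Qed.

Lemma Gamma_p_pos p s : (1 <= p)%nat -> 0 < s -> 0 < Gamma_p p s.
Proof.
  intros Hp Hs. unfold Gamma_p. apply Rdiv_lt_0_compat.
  apply Rmult_lt_0_compat. apply lt_0_INR. pose proof (Factorial.lt_O_fact p). lia.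
  apply Rpower_pos. apply prod_pos; auto.
Qed.

Lemma ln_Gamma_p p s : (1 <= p)%nat -> 0 < s ->
  ln (Gamma_p p s) = ln (INR (Factorial.fact p)) + s * ln (INR p) - sum_f_R0 (fun k => ln (s + INR k)) p.
Proof.
  intros Hp Hs. unfold Gamma_p.
  assert (0 < INR (Factorial.fact p)) by (apply lt_0_INR; pose proof (Factorial.lt_O_fact p); lia).
  assert (0 < INR p) by (apply lt_0_INR; lia).
  rewrite ln_div, ln_mult, ln_Rpower, ln_prod; auto.
  apply Rpower_pos. apply Rmult_lt_0_compat; auto. apply Rpower_pos. apply prod_pos; auto.
Qed.

Lemma derive_ln_shift c s : 0 < s + c -> is_derive (fun s => ln (s + c)) s (/ (s + c)).
Proof. intros H. auto_derive. lra. field. lra. Qed.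

Lemma derive_sum_ln m s : 0 < s ->
  is_derive (fun s => sum_f_R0 (fun k => ln (s + INR k)) m) s (sum_f_R0 (fun k => / (s + INR k)) m).
Proof.
  intros Hs. induction m.
  - apply derive_ln_shift. simpl. lra.
  - cbn [sum_f_R0].
    assert (HB : is_derive (fun s => ln (s + INR (S m))) s (/ (s + INR (S m)))).
    { apply derive_ln_shift. pose proof (pos_INR (S m)). lra. }
    exact (is_derive_plus _ _ s _ _ IHm HB).
Qed.

Lemma psi_p_val p t : (1 <= p)%nat -> 0 < t ->
  psi_p p t = ln (INR p) - sum_f_R0 (fun k => / (t + INR k)) p.
Proof.
  intros Hp Ht. unfold psi_p. apply is_derive_unique.
  apply (is_derive_ext_loc (fun s => ln (INR (Factorial.fact p)) + s * ln (INR p) - sum_f_R0 (fun k => ln (s + INR k)) p)).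
  - exists (mkposreal t Ht). intros y Hy. simpl in Hy.
    unfold ball in Hy; simpl in Hy; unfold AbsRing_ball, abs, minus, plus, opp in Hy; simpl in Hy.
    apply Rabs_def2 in Hy.
    rewrite ln_Gamma_p; auto. lra.
  - pose proof (derive_sum_ln p t Ht).
    assert (HA : is_derive (fun s => ln (INR (Factorial.fact p)) + s * ln (INR p)) t (ln (INR p))).
    { auto_derive. auto. ring. }
    exact (is_derive_minus _ _ t _ _ HA H).
Qed.

Definition pz (y x : R) : R := if Rle_dec x 0 then 0 else Rpower x y.

Lemma Rpower_base1 y : Rpower 1 y = 1.
Proof. unfold Rpower. rewrite ln_1, Rmult_0_r. apply exp_0. Qed.

Lemma Rpower_le1 x y : 0 < x <= 1 -> 0 <= y -> Rpower x y <= 1.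
Proof. intros. rewrite <- (Rpower_base1 y). apply Rle_Rpower_l; lra. Qed.

Lemma cont_Rpower y x : 0 < x -> continuous (fun x => Rpower x y) x.
Proof.
  intros Hx. apply continuity_pt_filterlim. apply derivable_continuous_pt.
  exists (y * Rpower x (y-1)). apply derivable_pt_lim_power. auto.
Qed.

Lemma cont_pz y x : 0 < y -> 0 <= x -> continuous (pz y) x.
Proof.
  intros Hy Hx. destruct (Rle_lt_or_eq_dec 0 x Hx) as [Hp|H0].
  - apply (continuous_ext_loc _ (fun x => Rpower x y)).
    + exists (mkposreal x Hp). intros z Hz.
      unfold ball in Hz; simpl in Hz; unfold AbsRing_ball, abs, minus, plus, opp in Hz; simpl in Hz.
      apply Rabs_def2 in Hz. unfold pz. destruct (Rle_dec z 0); [lra | reflexivity].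
    + apply cont_Rpower; auto.
  - subst x. unfold continuous. apply (proj2 (filterlim_locally _ _)).
    intros eps.
    assert (He : 0 < Rmin 1 (Rpower eps (/ y))) by (apply Rmin_glb_lt; [lra | apply Rpower_pos]).
    exists (mkposreal _ He). intros z Hz.
    unfold ball in Hz |- *; simpl in Hz |- *; unfold AbsRing_ball, abs, minus, plus, opp in Hz |- *; simpl in Hz |- *.
    unfold pz at 2. destruct (Rle_dec 0 0) as [_|n]; [|lra].
    rewrite Ropp_0, Rplus_0_r in Hz |- *.
    unfold pz. destruct (Rle_dec z 0).
    + rewrite Rabs_R0. apply cond_pos.
    + rewrite Rabs_pos_eq by (apply Rlt_le, Rpower_pos).
      apply Rabs_def2 in Hz. destruct Hz as [Hz _].
      assert (z < Rpower eps (/ y)) by (pose proof (Rmin_r 1 (Rpower eps (/ y))); lra).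
      apply Rlt_le_trans with (Rpower (Rpower eps (/ y)) y).
      apply Rlt_Rpower_l; lra.
      rewrite Rpower_mult, Rinv_l, Rpower_1 by (try apply cond_pos; lra). lra.
Qed.

Lemma ex_RInt_pw y (g : R -> R) a b : 0 < y -> 0 <= a <= b ->
  (forall x, a <= x <= b -> continuous g x) ->
  ex_RInt (fun x => Rpower x y * g x) a b.
Proof.
  intros Hy Hab Hg.
  apply (ex_RInt_ext (fun x => pz y x * g x)).
  - intros x Hx. rewrite Rmin_left, Rmax_right in Hx by lra.
    unfold pz. destruct (Rle_dec x 0); [lra | reflexivity].
  - apply (ex_RInt_continuous (V:=R_CompleteNormedModule)). intros z Hz. rewrite Rmin_left, Rmax_right in Hz by lra.
    apply (continuous_mult (pz y) g). apply cont_pz; lra. apply Hg; lra.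
Qed.

Lemma cont_R (f : R -> R) x : ex_derive f x -> continuous f x.
Proof. apply (ex_derive_continuous (K:=R_AbsRing) (V:=R_NormedModule)). Qed.

Lemma Rpower_le1' x y : 0 <= x <= 1 -> 0 <= y -> Rpower x y <= 1.
Proof.
  intros Hx Hy. destruct (Rle_lt_or_eq_dec 0 x (proj1 Hx)).
  apply Rpower_le1; lra. subst x. unfold Rpower. rewrite ln_0, Rmult_0_r, exp_0. lra.
Qed.

Lemma Rpower_nonneg x y : 0 <= Rpower x y.
Proof. apply Rlt_le, Rpower_pos. Qed.

Lemma zero_of_small x : (forall a, 0 < a < 1 -> Rabs x <= 2 * a) -> x = 0.
Proof.
  intros H. destruct (Req_dec x 0) as [e|n]; auto.
  assert (0 < Rabs x) by (apply Rabs_pos_lt; auto).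
  specialize (H (Rmin (1/2) (Rabs x / 4))).
  assert (Rmin (1/2) (Rabs x / 4) <= Rabs x / 4) by apply Rmin_r.
  assert (0 < Rmin (1/2) (Rabs x / 4)) by (apply Rmin_glb_lt; lra).
  assert (Rmin (1/2) (Rabs x / 4) <= 1/2) by apply Rmin_l.
  specialize (H ltac:(lra)). lra.
Qed.

Lemma is_derive_pow_div s x : 0 < x -> 0 < s ->
  is_derive (fun x => / s * Rpower x s) x (Rpower x (s-1)).
Proof.
  intros Hx Hs. apply is_derive_Reals.
  replace (Rpower x (s-1)) with (/ s * (s * Rpower x (s-1))) by (field; lra).
  apply (derivable_pt_lim_scal (fun x => Rpower x s)). apply derivable_pt_lim_power. auto.
Qed.

Lemma beta_base s : 1 < s ->
  is_RInt (fun u => Rpower u (s-1) * (1-u)^0) 0 1 (/ s).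
Proof.
  intros Hs.
  set (F := fun u => Rpower u (s-1) * (1-u)^0).
  assert (Ex : forall a b, 0 <= a <= b -> ex_RInt F a b).
  { intros a b Hab. apply ex_RInt_pw. lra. auto. intros x _. apply continuous_const. }
  assert (HI : RInt F 0 1 = / s).
  { assert (Hd : RInt F 0 1 - / s = 0).
    { apply zero_of_small. intros a Ha.
      rewrite <- (RInt_Chasles F 0 a 1) by (apply Ex; lra).
      assert (H1 : is_RInt F a 1 (/ s * Rpower 1 s - / s * Rpower a s)).
      { apply (is_RInt_derive (fun x => / s * Rpower x s) F).
        - intros x Hx. rewrite Rmin_left, Rmax_right in Hx by lra.
          unfold F. simpl. rewrite Rmult_1_r. apply is_derive_pow_div; lra.
        - intros x Hx. rewrite Rmin_left, Rmax_right in Hx by lra.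
          unfold F. apply (continuous_mult (fun u => Rpower u (s-1)) (fun u => (1-u)^0)).
          apply cont_Rpower; lra. apply continuous_const. }
      rewrite (is_RInt_unique _ _ _ _ H1).
      assert (H2 : Rabs (RInt F 0 a) <= (a - 0) * 1).
      { apply abs_RInt_le_const. lra. apply Ex; lra. intros x Hx. unfold F. simpl.
        rewrite Rmult_1_r, Rabs_pos_eq by apply Rpower_nonneg. apply Rpower_le1'; lra. }
      rewrite Rpower_base1. 
      assert (H3 : Rpower a s <= a).
      { replace s with (1 + (s-1)) at 1 by ring. rewrite Rpower_plus, Rpower_1 by lra.
        pose proof (Rpower_le1 a (s-1) ltac:(lra) ltac:(lra)). pose proof (Rpower_pos a (s-1)). nra. }
      pose proof (Rpower_pos a s).
      assert (0 < / s < 1). { split. apply Rinv_0_lt_compat; lra. rewrite <- Rinv_1. apply Rinv_lt_contravar; lra. }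
      change (plus (RInt F 0 a) (/ s * 1 - / s * Rpower a s)) with (RInt F 0 a + (/ s * 1 - / s * Rpower a s)).
      apply Rabs_le. apply Rabs_le_between in H2.
      assert (0 <= / s * Rpower a s <= a) by (split; nra).
      lra. }
    lra. }
  rewrite <- HI. apply (RInt_correct (V:=R_CompleteNormedModule)). apply Ex. lra.
Qed.

Lemma prod_shift s m : prod_f_R0 (fun k => s + INR k) (S m) = s * prod_f_R0 (fun k => s + 1 + INR k) m.
Proof.
  induction m.
  - simpl. ring.
  - cbn [prod_f_R0]. cbn [prod_f_R0] in IHm. rewrite IHm. rewrite (S_INR (S m)). ring.
Qed.

Lemma beta s m : 1 < s ->
  is_RInt (fun u => Rpower u (s-1) * (1-u)^m) 0 1 (INR (Factorial.fact m) / prod_f_R0 (fun k => s + INR k) m).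
Proof.
  revert s. induction m; intros s Hs.
  - replace (INR (Factorial.fact 0) / prod_f_R0 (fun k => s + INR k) 0) with (/ s)
      by (simpl; field; lra).
    apply beta_base; auto.
  - pose proof (IHm s Hs) as A. pose proof (IHm (s+1) ltac:(lra)) as B.
    pose proof (is_RInt_minus _ _ _ _ _ _ A B) as C.
    assert (P0 : 0 < prod_f_R0 (fun k => s + INR k) m) by (apply prod_pos; lra).
    assert (Q0 : 0 < prod_f_R0 (fun k => s + 1 + INR k) m).
    { replace (fun k => s + 1 + INR k) with (fun k => (s+1) + INR k) by reflexivity. apply prod_pos; lra. }
    assert (E : prod_f_R0 (fun k => s + INR k) (S m) = prod_f_R0 (fun k => s + INR k) m * (s + INR (S m)))
      by reflexivity.
    pose proof (prod_shift s m) as E2.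
    assert (HS : 0 < s + INR (S m)) by (pose proof (pos_INR (S m)); lra).
    replace (INR (Factorial.fact (S m)) / prod_f_R0 (fun k => s + INR k) (S m)) with
      (minus (INR (Factorial.fact m) / prod_f_R0 (fun k => s + INR k) m)
             (INR (Factorial.fact m) / prod_f_R0 (fun k => s + 1 + INR k) m)).
    2: { change (minus ?x ?y) with (x - y).
         assert (Qe : prod_f_R0 (fun k => s + 1 + INR k) m = prod_f_R0 (fun k => s + INR k) m * (s + INR (S m)) / s).
         { rewrite <- E, E2. field. lra. }
         rewrite Qe, E. cbn [Factorial.fact]. rewrite mult_INR. rewrite (S_INR m).
         rewrite S_INR in HS. match goal with |- ?a = ?b => change (@eq R a b) end. field. repeat split; lra. }
    eapply is_RInt_ext; [|exact C].
    intros x Hx. rewrite Rmin_left, Rmax_right in Hx by lra.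
    change (minus ?x ?y) with (x - y).
    replace (s + 1 - 1) with (1 + (s - 1)) by ring.
    rewrite Rpower_plus, Rpower_1 by lra. simpl pow. match goal with |- ?a = ?b => change (@eq R a b) end. ring.
Qed.

Definition gn (s : R) (n : nat) (x : R) := Rpower x (s-1) * (1 - x / INR n)^n.
Definition fG (s x : R) := Rpower x (s-1) * exp (- x).

Lemma gn_int s n : 1 < s -> (1 <= n)%nat -> is_RInt (gn s n) 0 (INR n) (Gamma_p n s).
Proof.
  intros Hs Hn. set (N := INR n).
  assert (HN : 0 < N) by (apply lt_0_INR; lia).
  pose proof (beta s n Hs) as B.
  set (P := INR (Factorial.fact n) / prod_f_R0 (fun k => s + INR k) n) in B.
  assert (B' : is_RInt (fun u => Rpower u (s-1) * (1-u)^n) (/N*0+0) (/N*N+0) P).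
  { replace (/N*0+0) with 0 by ring. replace (/N*N+0) with 1 by (field; lra). exact B. }
  pose proof (is_RInt_comp_lin _ (/N) 0 0 N P B') as C.
  pose proof (is_RInt_scal _ _ _ (Rpower N s) _ C) as D.
  replace (Gamma_p n s) with (scal (Rpower N s) P).
  2: { change (scal ?x ?y) with (x * y). unfold Gamma_p, P. fold N.
       match goal with |- ?a = ?b => change (@eq R a b) end. field.
       apply Rgt_not_eq, prod_pos. lra. }
  eapply is_RInt_ext; [|exact D].
  intros x Hx. rewrite Rmin_left, Rmax_right in Hx by lra.
  change (scal ?x ?y) with (x * y). unfold gn. fold N.
  match goal with |- ?a = ?b => change (@eq R a b) end.
  replace (/ N * x + 0) with (/ N * x) by ring.
  replace (Rpower N s) with (N * Rpower N (s-1)).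
  2: { replace s with (1 + (s-1)) at 2 by ring. rewrite Rpower_plus, Rpower_1; auto. }
  assert (E : Rpower N (s-1) * Rpower (/ N * x) (s-1) = Rpower x (s-1)).
  { rewrite Rpower_mult_distr. f_equal. field. lra. lra.
    apply Rmult_lt_0_compat. apply Rinv_0_lt_compat; lra. lra. }
  rewrite <- E. replace (x / N) with (/ N * x) by (unfold Rdiv; ring). change (scal ?x ?y) with (x * y). field. lra.
Qed.

Lemma exp_approx n x : (1 <= n)%nat -> 0 <= x <= INR n ->
  (0 <= (1 - x / INR n)^n <= exp (-x)) /\ exp (-x) - (1 - x / INR n)^n <= x^2 * exp (-x) / INR n.
Proof.
  intros Hn Hx. set (N := INR n) in *.
  assert (HN : 0 < N) by (apply lt_0_INR; lia).
  set (y := x / N).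
  assert (Hy : 0 <= y <= 1).
  { unfold y. split. apply Rmult_le_pos; [lra | apply Rlt_le, Rinv_0_lt_compat; lra].
    apply Rmult_le_reg_r with N; auto. unfold Rdiv. rewrite Rmult_assoc, Rinv_l; lra. }
  assert (Ex : N * y = x) by (unfold y; field; lra).
  split. split. apply pow_le; lra.
  - rewrite <- Ex. replace (- (N*y)) with (N * (-y)) by ring. unfold N. rewrite <- exp_pow_n.
    apply pow_incr. pose proof (exp_ineq1_le (-y)). lra.
  - assert (H1 : ((1 - y) * (1 + y))^n <= ((1 - y) * exp y)^n).
    { apply pow_incr. split. nra. apply Rmult_le_compat_l. lra. apply exp_ineq1_le. }
    replace ((1 - y) * (1 + y)) with (1 - y^2) in H1 by ring.
    rewrite Rpow_mult_distr in H1. rewrite exp_pow_n in H1. fold N in H1. rewrite Ex in H1.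
    pose proof (bernoulli (y^2) n ltac:(split; nra)) as H2. fold N in H2.
    assert (H3 : 1 - x^2 / N <= (1 - y)^n * exp x).
    { replace (x^2 / N) with (N * y^2) by (rewrite <- Ex; field; lra). lra. }
    assert (H4 : exp (-x) * (1 - x^2/N) <= exp (-x) * ((1-y)^n * exp x)) by (apply Rmult_le_compat_l; [apply Rlt_le, exp_pos | auto]).
    replace (exp (-x) * ((1-y)^n * exp x)) with ((1-y)^n) in H4.
    2: { rewrite <- (Rmult_comm (exp x)), <- Rmult_assoc, <- exp_plus. replace (-x + x) with 0 by ring. rewrite exp_0. ring. }
    unfold Rdiv in *. lra.
Qed.

Lemma le_div_sq v C x : 0 <= x -> v * (1+x)^2 <= C -> v <= C / (1+x)^2.
Proof.
  intros Hx H. assert (0 < (1+x)^2) by (apply pow_lt; lra).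
  apply Rmult_le_reg_r with ((1+x)^2); auto. unfold Rdiv. rewrite Rmult_assoc, Rinv_l; lra.
Qed.

Lemma fG_nonneg s x : 0 <= fG s x.
Proof. unfold fG. apply Rmult_le_pos. apply Rpower_nonneg. apply Rlt_le, exp_pos. Qed.

Lemma fG_bound s : 1 < s -> exists C, 1 <= C /\ forall x, 0 < x ->
   fG s x <= C / (1+x)^2 /\ x^2 * fG s x <= C / (1+x)^2.
Proof.
  intros Hs. destruct (INR_unbounded (s+3)) as [N HN].
  assert (HN1 : (1 <= N)%nat) by (destruct N; simpl in HN; [lra | lia]).
  assert (HN0 : 0 < INR N) by lra.
  set (K := 1 + INR N ^ N).
  assert (HK : 1 <= K) by (unfold K; pose proof (pow_le (INR N) N ltac:(lra)); lra).
  assert (Cl1 : forall x, 0 < x -> Rpower x (s+3) * exp (-x) <= K).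
  { intros x Hx.
    assert (A : Rpower x (s+3) <= 1 + x^N).
    { destruct (Rle_dec x 1).
      - pose proof (Rpower_le1 x (s+3) ltac:(lra) ltac:(lra)). pose proof (pow_le x N ltac:(lra)). lra.
      - rewrite <- Rpower_pow by lra. pose proof (Rle_Rpower x (s+3) (INR N) ltac:(lra) ltac:(lra)). lra. }
    assert (B : x^N * exp (-x) <= INR N ^ N).
    { assert (E1 : x^N = INR N ^ N * (x / INR N)^N) by (rewrite <- Rpow_mult_distr; f_equal; field; lra).
      assert (E2 : (x / INR N)^N <= exp x).
      { replace (exp x) with (exp (x / INR N) ^ N) by (rewrite exp_pow_n; f_equal; field; lra).
        apply pow_incr. split. apply Rmult_le_pos; [lra | apply Rlt_le, Rinv_0_lt_compat; lra].
        pose proof (exp_ineq1_le (x / INR N)). lra. }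
      rewrite E1. pose proof (pow_lt (INR N) N HN0).
      assert (H5 : INR N ^ N * (x / INR N)^N * exp (-x) <= INR N ^ N * exp x * exp (-x)).
      { apply Rmult_le_compat_r. apply Rlt_le, exp_pos. apply Rmult_le_compat_l; lra. }
      replace (INR N ^ N * exp x * exp (-x)) with (INR N ^ N) in H5.
      lra. rewrite Rmult_assoc, <- exp_plus. replace (x + -x) with 0 by ring. rewrite exp_0. ring. }
    assert (exp (-x) <= 1) by (rewrite <- exp_0; apply exp_le_3 || (left; apply exp_increasing; lra)).
    pose proof (Rpower_pos x (s+3)). pose proof (exp_pos (-x)). unfold K. nra. }
  exists (4 * K). split. lra. intros x Hx.
  pose proof (fG_nonneg s x).
  destruct (Rle_dec x 1).
  - assert (fG s x <= 1).
    { unfold fG. pose proof (Rpower_le1 x (s-1) ltac:(lra) ltac:(lra)).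
      assert (exp (-x) <= 1) by (rewrite <- exp_0; left; apply exp_increasing; lra).
      pose proof (Rpower_pos x (s-1)). pose proof (exp_pos (-x)). nra. }
    assert ((1+x)^2 <= 4) by nra.
    assert (0 <= (1+x)^2) by (apply pow_le; lra).
    assert (x^2 <= 1) by nra.
    assert (fG s x * (1+x)^2 <= 1 * 4) by (apply Rmult_le_compat; lra).
    assert (x^2 * fG s x <= 1 * 1) by (apply Rmult_le_compat; try lra; apply pow_le; lra).
    assert (0 <= x^2 * fG s x) by (apply Rmult_le_pos; [apply pow_le; lra| lra]).
    assert (x^2 * fG s x * (1+x)^2 <= 1 * 4) by (apply Rmult_le_compat; lra).
    split; apply le_div_sq; lra.
  - assert (E : Rpower x (s+3) * exp (-x) = x^4 * fG s x).
    { unfold fG. replace (s+3) with ((s-1) + INR 4) by (simpl; ring).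
      rewrite Rpower_plus, Rpower_pow by lra. ring. }
    specialize (Cl1 x Hx). rewrite E in Cl1.
    assert (x^2 * fG s x * (1+x)^2 <= 4 * K).
    { assert ((1+x)^2 <= 4 * x^2) by nra.
      assert (0 <= x^2 * fG s x) by (apply Rmult_le_pos; [apply pow_le; lra | auto]).
      assert (x^2 * fG s x * (1+x)^2 <= x^2 * fG s x * (4 * x^2)) by (apply Rmult_le_compat_l; auto).
      replace (x^2 * fG s x * (4 * x^2)) with (4 * (x^4 * fG s x)) in H2 by ring. lra. }
    assert (fG s x <= x^2 * fG s x) by (assert (1 <= x^2) by nra; nra).
    split; apply le_div_sq; try lra.
    assert (0 <= (1+x)^2) by (apply pow_le; lra). nra.
Qed.

Lemma ex_fG s a b : 1 < s -> 0 <= a <= b -> ex_RInt (fG s) a b.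
Proof.
  intros Hs Hab. unfold fG. apply ex_RInt_pw. lra. auto.
  intros x _. apply cont_R. auto_derive. auto.
Qed.

Lemma ex_gn s n a b : 1 < s -> (1 <= n)%nat -> 0 <= a <= b -> ex_RInt (gn s n) a b.
Proof.
  intros Hs Hn Hab. unfold gn. apply ex_RInt_pw. lra. auto.
  intros x _. apply cont_R. assert (INR n <> 0) by (apply not_0_INR; lia). auto_derive. auto.
Qed.

Lemma int_inv_sq K a b : 0 <= a <= b ->
  is_RInt (fun x => K / (1+x)^2) a b (K / (1+a) - K / (1+b)).
Proof.
  intros Hab.
  replace (K / (1 + a) - K / (1 + b)) with (minus ((fun x => - K / (1+x)) b) ((fun x => - K / (1+x)) a)).
  2: { change (minus ?x ?y) with (x - y). match goal with |- ?a = ?b => change (@eq R a b) end.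
       field. split; lra. }
  apply (is_RInt_derive (V:=R_CompleteNormedModule) (fun x => - K / (1+x)) (fun x => K / (1+x)^2)).
  - intros x Hx. rewrite Rmin_left, Rmax_right in Hx by lra. auto_derive. lra. field. lra.
  - intros x Hx. rewrite Rmin_left, Rmax_right in Hx by lra. apply cont_R. auto_derive. apply Rgt_not_eq; nra.
Qed.

Lemma exp_neg_le1 x : 0 <= x -> exp (-x) <= 1.
Proof.
  intros Hx. rewrite <- exp_0. destruct (Rle_lt_or_eq_dec 0 x Hx).
  apply Rlt_le, exp_increasing; lra. subst; rewrite Ropp_0; lra.
Qed.

Section Dec.
Variable s : R.
Hypothesis Hs : 1 < s.
Variable C : R.
Hypothesis HC1 : 1 <= C.
Hypothesis HC : forall x, 0 < x -> fG s x <= C / (1+x)^2 /\ x^2 * fG s x <= C / (1+x)^2.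

Lemma gn_bounds n x : (1 <= n)%nat -> 0 <= x <= INR n ->
  0 <= gn s n x <= fG s x /\ fG s x - gn s n x <= x^2 * fG s x / INR n.
Proof.
  intros Hn Hx. destruct (exp_approx n x Hn Hx) as [[A1 A2] A3].
  pose proof (Rpower_nonneg x (s-1)).
  unfold gn, fG. split. split. apply Rmult_le_pos; auto. apply Rmult_le_compat_l; auto.
  assert (Rpower x (s-1) * (exp (-x) - (1 - x / INR n)^n) <= Rpower x (s-1) * (x^2 * exp (-x) / INR n))
    by (apply Rmult_le_compat_l; auto).
  unfold Rdiv in *. nra.
Qed.

Lemma decomp n a b : (1 <= n)%nat -> 0 < a <= 1 -> a < b <= INR n ->
  Gamma_p n s = RInt (gn s n) 0 a + RInt (gn s n) a b + RInt (gn s n) b (INR n) /\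
  0 <= RInt (gn s n) 0 a <= a /\
  0 <= RInt (gn s n) b (INR n) <= C / (1+b) /\
  RInt (fG s) a b - C / INR n <= RInt (gn s n) a b <= RInt (fG s) a b.
Proof.
  intros Hn Ha Hb. set (N := INR n) in *.
  assert (HN : 1 <= N) by (unfold N; apply (le_INR 1); auto).
  pose proof (gn_int s n Hs Hn) as GI. fold N in GI.
  assert (Eg : forall u v, 0 <= u <= v -> ex_RInt (gn s n) u v) by (intros; apply ex_gn; auto).
  assert (Ef : forall u v, 0 <= u <= v -> ex_RInt (fG s) u v) by (intros; apply ex_fG; auto).
  split; [|split; [|split]].
  - rewrite <- (is_RInt_unique _ _ _ _ GI).
    rewrite <- (RInt_Chasles (V:=R_CompleteNormedModule) (gn s n) 0 b N) by (apply Eg; lra).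
    rewrite <- (RInt_Chasles (V:=R_CompleteNormedModule) (gn s n) 0 a b) by (apply Eg; lra).
    reflexivity.
  - split. apply RInt_ge_0. lra. apply Eg; lra. intros x Hx. destruct (gn_bounds n x Hn ltac:(fold N; lra)) as [[? ?] ?]; lra.
    pose proof (abs_RInt_le_const (gn s n) 0 a 1 ltac:(lra) ltac:(apply Eg; lra)) as H.
    assert (Rabs (RInt (gn s n) 0 a) <= (a - 0) * 1).
    { apply H. intros x Hx. destruct (gn_bounds n x Hn ltac:(fold N; lra)) as [[B1 B2] _].
      rewrite Rabs_pos_eq by auto. unfold gn.
      destruct (exp_approx n x Hn ltac:(fold N; lra)) as [[A1 A2] _].
      pose proof (exp_neg_le1 x ltac:(lra)).
      pose proof (Rpower_le1' x (s-1) ltac:(lra) ltac:(lra)). pose proof (Rpower_nonneg x (s-1)).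
      assert (Rpower x (s-1) * (1 - x/INR n)^n <= 1 * 1) by (apply Rmult_le_compat; lra). lra. }
    apply Rabs_le_between in H0. lra.
  - split. apply RInt_ge_0. lra. apply Eg; lra. intros x Hx. destruct (gn_bounds n x Hn ltac:(fold N; lra)) as [[? ?] ?]; lra.
    pose proof (int_inv_sq C b N ltac:(lra)) as II.
    assert (RInt (gn s n) b N <= RInt (fG s) b N).
    { apply RInt_le. lra. apply Eg; lra. apply Ef; lra. intros x Hx. destruct (gn_bounds n x Hn ltac:(fold N; lra)) as [[? ?] ?]; lra. }
    assert (RInt (fG s) b N <= C / (1+b) - C / (1+N)).
    { apply (is_RInt_le (fG s) (fun x => C / (1+x)^2) b N). lra.
      apply (RInt_correct (V:=R_CompleteNormedModule)). apply Ef; lra. exact II.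
      intros x Hx. apply HC. lra. }
    assert (0 < C / (1+N)) by (apply Rdiv_lt_0_compat; lra). lra.
  - split.
    + pose proof (int_inv_sq (C / N) a b ltac:(lra)) as II.
      assert (RInt (fG s) a b <= RInt (gn s n) a b + (C / N / (1+a) - C / N / (1+b))).
      { apply (is_RInt_le (fG s) (fun x => gn s n x + C / N / (1+x)^2) a b). lra.
        apply (RInt_correct (V:=R_CompleteNormedModule)). apply Ef; lra.
        apply (is_RInt_plus (V:=R_NormedModule) (gn s n) (fun x => C / N / (1+x)^2)). 
        apply (RInt_correct (V:=R_CompleteNormedModule)). apply Eg; lra. exact II.
        intros x Hx. destruct (gn_bounds n x Hn ltac:(fold N; lra)) as [_ B].
        destruct (HC x ltac:(lra)) as [_ D].
        assert (x^2 * fG s x / N <= C / (1+x)^2 / N).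
        { unfold Rdiv. apply Rmult_le_compat_r. apply Rlt_le, Rinv_0_lt_compat; lra. unfold Rdiv in D. auto. }
        replace (C / N / (1+x)^2) with (C / (1+x)^2 / N) by (field; split; nra). fold N in B. lra. }
      assert (0 < C / N / (1+b)) by (apply Rdiv_lt_0_compat; [apply Rdiv_lt_0_compat|]; lra).
      assert (C / N / (1+a) <= C / N).
      { unfold Rdiv at 1. rewrite <- (Rmult_1_r (C/N)) at 2. apply Rmult_le_compat_l.
        apply Rlt_le, Rdiv_lt_0_compat; lra. rewrite <- Rinv_1. apply Rinv_le_contravar; lra. }
      lra.
    + apply RInt_le. lra. apply Eg; lra. apply Ef; lra. intros x Hx. destruct (gn_bounds n x Hn ltac:(fold N; lra)) as [[? ?] ?]; lra.
Qed.

End Dec.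

Lemma lim_C_over_n C : is_lim_seq (fun n => C / INR n) 0.
Proof.
  replace 0 with (C * 0) by ring.
  apply (is_lim_seq_scal_l (fun n => / INR n) C 0).
  replace (Finite 0) with (Rbar_inv p_infty) by reflexivity.
  apply is_lim_seq_inv. apply is_lim_seq_INR. discriminate.
Qed.

Lemma Gamma_core s : 1 < s -> is_lim_seq (fun n => Gamma_p n s) (Gamma s) /\ 0 < Gamma s.
Proof.
  intros Hs. destruct (fG_bound s Hs) as [C [HC1 HC]].
  assert (KB : forall n a b, (1 <= n)%nat -> 0 < a <= 1 -> a < b <= INR n ->
     Rabs (RInt (fG s) a b - Gamma_p n s) <= C / INR n + a + C / (1+b)).
  { intros n a b Hn Ha Hb.
    destruct (decomp s Hs C HC1 HC n a b Hn Ha Hb) as [E [B0 [B2 B1]]].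
    rewrite E. apply Rabs_le. lra. }
  assert (Cau : ex_lim_seq_cauchy (fun n => Gamma_p n s)).
  { intros eps. set (e := pos eps). assert (He : 0 < e) by apply cond_pos.
    destruct (INR_unbounded (8 * C / e + 1)) as [N HN].
    assert (HCe : 0 <= 8 * C / e) by (apply Rmult_le_pos; [lra | apply Rlt_le, Rinv_0_lt_compat; lra]).
    assert (HN1 : (1 <= N)%nat) by (destruct N; simpl in HN; [lra | lia]).
    assert (HNp : 0 < INR N) by lra.
    assert (HCN : C / INR N < e / 8).
    { apply Rmult_lt_reg_r with (INR N); auto. unfold Rdiv. rewrite Rmult_assoc, Rinv_l by lra.
      assert (8 * C / e * e = 8 * C) by (field; lra).
      assert (8 * C / e < INR N) by lra.
      assert (8 * C / e * e < INR N * e) by (apply Rmult_lt_compat_r; lra). lra. }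
    exists N. intros n m Hn Hm.
    set (a := Rmin (1/2) (e/8)).
    assert (Ha : 0 < a <= 1/2) by (split; [apply Rmin_glb_lt; lra | apply Rmin_l]).
    assert (Ha2 : a <= e/8) by apply Rmin_r.
    assert (Hbn : INR N <= INR n) by (apply le_INR; auto).
    assert (Hbm : INR N <= INR m) by (apply le_INR; auto).
    pose proof (KB n a (INR N) ltac:(lia) ltac:(lra) ltac:(lra)) as K1.
    pose proof (KB m a (INR N) ltac:(lia) ltac:(lra) ltac:(lra)) as K2.
    assert (C / INR n <= C / INR N).
    { unfold Rdiv. apply Rmult_le_compat_l. lra. apply Rinv_le_contravar; lra. }
    assert (C / INR m <= C / INR N).
    { unfold Rdiv. apply Rmult_le_compat_l. lra. apply Rinv_le_contravar; lra. }
    assert (C / (1 + INR N) <= C / INR N).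
    { unfold Rdiv. apply Rmult_le_compat_l. lra. apply Rinv_le_contravar; lra. }
    apply Rabs_le_between in K1. apply Rabs_le_between in K2.
    apply Rabs_def1; lra. }
  apply ex_lim_seq_cauchy_corr in Cau.
  pose proof (Lim_seq_correct' _ Cau) as HL.
  set (l := real (Lim_seq (fun n => Gamma_p n s))) in *.
  assert (B2 : forall a b, 0 < a <= 1 -> a < b -> Rabs (RInt (fG s) a b - l) <= a + C / (1+b)).
  { intros a b Ha Hb.
    destruct (INR_unbounded b) as [M HM].
    assert (EV : eventually (fun n => Rabs (RInt (fG s) a b - Gamma_p n s) <= C / INR n + a + C / (1+b))).
    { exists (max M 1). intros n Hn. apply KB. lia. lra.
      split. lra. apply Rle_trans with (INR M). lra. apply le_INR. lia. }
    assert (L1 : is_lim_seq (fun n => Rabs (RInt (fG s) a b - Gamma_p n s)) (Rabs (RInt (fG s) a b - l))).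
    { apply (is_lim_seq_abs _ (RInt (fG s) a b - l)).
      apply is_lim_seq_minus'. apply is_lim_seq_const. exact HL. }
    assert (L2 : is_lim_seq (fun n => C / INR n + a + C / (1+b)) (0 + a + C / (1+b))).
    { apply is_lim_seq_plus'. apply is_lim_seq_plus'. apply lim_C_over_n. apply is_lim_seq_const.
      apply is_lim_seq_const. }
    pose proof (is_lim_seq_le_loc _ _ _ _ EV L1 L2). simpl in H. lra. }
  assert (IG : is_RInt_gen (fG s) (at_right 0) (Rbar_locally p_infty) l).
  { intros P [eps HP].
    set (e := pos eps). assert (He : 0 < e) by apply cond_pos.
    assert (HA : 0 < Rmin 1 (e/2)) by (apply Rmin_glb_lt; lra).
    apply Filter_prod with (Q := fun a => 0 < a < Rmin 1 (e/2)) (R := fun b => Rmax 1 (2 * C / e) < b).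
    - exists (mkposreal _ HA). intros y Hy Hy0. simpl.
      unfold ball in Hy; simpl in Hy; unfold AbsRing_ball, abs, minus, plus, opp in Hy; simpl in Hy.
      apply Rabs_def2 in Hy. lra.
    - exists (Rmax 1 (2 * C / e)). auto.
    - intros a b Qa Rb. simpl.
      pose proof (Rmin_l 1 (e/2)). pose proof (Rmin_r 1 (e/2)).
      pose proof (Rmax_l 1 (2 * C / e)). pose proof (Rmax_r 1 (2 * C / e)).
      exists (RInt (fG s) a b). split.
      + apply (RInt_correct (V:=R_CompleteNormedModule)). apply ex_fG; lra.
      + apply HP. unfold ball; simpl; unfold AbsRing_ball, abs, minus, plus, opp; simpl.
        pose proof (B2 a b ltac:(lra) ltac:(lra)).
        assert (C / (1+b) < e/2).
        { apply Rmult_lt_reg_r with (1+b). lra. unfold Rdiv. rewrite Rmult_assoc, Rinv_l by lra.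
          assert (2 * C / e < b) by lra.
          assert (2 * C / e * e < b * e) by (apply Rmult_lt_compat_r; lra).
          assert (2 * C / e * e = 2 * C) by (field; lra). nra. }
        fold e. replace (RInt (fG s) a b + - l) with (RInt (fG s) a b - l) by ring. lra. }
  assert (GE : Gamma s = l).
  { unfold Gamma.
    exact (@is_RInt_gen_unique R_CompleteNormedModule (at_right 0) (Rbar_locally p_infty)
      (Proper_StrongProper _ (at_right_proper_filter 0)) (Proper_StrongProper _ (Rbar_locally_filter p_infty)) (fG s) l IG). }
  rewrite GE. split. exact HL.
  assert (F12 : exp (-2) <= RInt (fG s) 1 2).
  { assert (H := RInt_le (fun _ => exp (-2)) (fG s) 1 2 ltac:(lra)).
    rewrite RInt_const in H. change (scal ?x ?y) with (x * y) in H.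
    replace ((2 - 1) * exp (-2)) with (exp (-2)) in H by ring.
    apply H. apply ex_RInt_const. apply ex_fG; lra.
    intros x Hx. unfold fG.
    assert (1 <= Rpower x (s-1)).
    { apply Rle_trans with (Rpower x 0). rewrite Rpower_O; lra. apply Rle_Rpower; lra. }
    assert (exp (-2) <= exp (-x)) by (apply Rlt_le, exp_increasing; lra).
    pose proof (exp_pos (-2)). nra. }
  assert (EV : eventually (fun n => exp (-2) - C / INR n <= Gamma_p n s)).
  { exists 2%nat. intros n Hn.
    assert (2 <= INR n) by (apply (le_INR 2); auto).
    destruct (decomp s Hs C HC1 HC n 1 2 ltac:(lia) ltac:(lra) ltac:(lra)) as [E [B0 [B2' B1]]].
    rewrite E. lra. }
  assert (L2 : is_lim_seq (fun n => exp (-2) - C / INR n) (exp (-2) - 0)).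
  { apply is_lim_seq_minus'. apply is_lim_seq_const. apply lim_C_over_n. }
  pose proof (is_lim_seq_le_loc _ _ _ _ EV L2 HL). simpl in H.
  pose proof (exp_pos (-2)). fold l in H. lra.
Qed.

Lemma sum_sub (f g : nat -> R) n : sum_f_R0 (fun k => f k - g k) n = sum_f_R0 f n - sum_f_R0 g n.
Proof. induction n; simpl; [ring | rewrite IHn; ring]. Qed.
Lemma sum_scal (f : nat -> R) c n : sum_f_R0 (fun k => c * f k) n = c * sum_f_R0 f n.
Proof. induction n; simpl; [ring | rewrite IHn; ring]. Qed.

Lemma Dn_eq n t h : (1 <= n)%nat -> 0 < t -> 0 < h ->
  ln (Gamma_p n (t+h)) - ln (Gamma_p n t) =
  h * ln (INR n) - sum_f_R0 (fun k => ln (t + h + INR k) - ln (t + INR k)) n.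
Proof.
  intros. rewrite !ln_Gamma_p by (auto; lra). rewrite sum_sub. ring.
Qed.

Lemma Dn_lower n t h : (1 <= n)%nat -> 1 < t -> 0 < h ->
  h * (1 - / t - vE (S n) - / INR n) <= ln (Gamma_p n (t+h)) - ln (Gamma_p n t).
Proof.
  intros Hn Ht Hh. rewrite Dn_eq by (auto; lra).
  assert (H1 : sum_f_R0 (fun k => ln (t + h + INR k) - ln (t + INR k)) n <=
               sum_f_R0 (fun k => h * / (t + INR k)) n).
  { apply sum_Rle. intros k _. pose proof (pos_INR k).
    pose proof (ln_diff_bounds (t + INR k) (t + h + INR k) ltac:(lra) ltac:(lra)).
    replace (t + h + INR k - (t + INR k)) with h in H0 by ring. unfold Rdiv in H0. lra. }
  rewrite sum_scal in H1.
  assert (H2 : forall m, sum_f_R0 (fun k => / (t + INR k)) m <= / t - 1 + sum_f_R0 (fun k => / INR (S k)) m).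
  { induction m.
    - simpl. rewrite Rplus_0_r, Rinv_1. lra.
    - rewrite !tech5. assert (/ (t + INR (S m)) <= / INR (S (S m))).
      { apply Rinv_le_contravar. apply lt_0_INR; lia. rewrite (S_INR (S m)). lra. }
      lra. }
  specialize (H2 n).
  assert (H3 : ln (INR (S n)) - ln (INR n) <= / INR n).
  { assert (0 < INR n) by (apply lt_0_INR; lia).
    pose proof (ln_diff_bounds (INR n) (INR (S n)) H ltac:(rewrite S_INR; lra)).
    rewrite S_INR in H0 |- *. replace (INR n + 1 - INR n) with 1 in H0 by ring. unfold Rdiv in H0. lra. }
  unfold vE. cbn [pred].
  assert (h * sum_f_R0 (fun k => / (t + INR k)) n <= h * (/ t - 1 + sum_f_R0 (fun k => / INR (S k)) n))
    by (apply Rmult_le_compat_l; lra).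
  assert (h * (ln (INR (S n)) - ln (INR n)) <= h * / INR n) by (apply Rmult_le_compat_l; lra).
  nra.
Qed.

Lemma Dn_upper n t h : (1 <= n)%nat -> 1 < t -> 0 < h <= 1 ->
  ln (Gamma_p n (t+h)) - ln (Gamma_p n t) <= h * (ln (Gamma_p n (t+1)) - ln (Gamma_p n t)).
Proof.
  intros Hn Ht Hh. rewrite !Dn_eq by (auto; lra).
  assert (H1 : sum_f_R0 (fun k => h * (ln (t + 1 + INR k) - ln (t + INR k))) n <=
               sum_f_R0 (fun k => ln (t + h + INR k) - ln (t + INR k)) n).
  { apply sum_Rle. intros k _. pose proof (pos_INR k).
    pose proof (ln_diff_bounds (t + INR k) (t + h + INR k) ltac:(lra) ltac:(lra)) as [A _].
    pose proof (ln_diff_bounds (t + h + INR k) (t + 1 + INR k) ltac:(lra) ltac:(lra)) as [_ B].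
    replace (t + h + INR k - (t + INR k)) with h in A by ring.
    replace (t + 1 + INR k - (t + h + INR k)) with (1 - h) in B by ring.
    set (y := t + h + INR k) in *.
    assert (0 < y) by (unfold y; lra).
    assert (Hb : h * (ln (t + 1 + INR k) - ln y) <= h * ((1 - h) / y)) by (apply Rmult_le_compat_l; lra).
    assert (Ha : (1 - h) * (h / y) <= (1 - h) * (ln y - ln (t + INR k))) by (apply Rmult_le_compat_l; lra).
    assert (h * ((1-h)/y) = (1-h) * (h/y)) by (field; lra).
    nra. }
  rewrite sum_scal in H1. lra.
Qed.

Lemma lnG_lim s : 1 < s -> is_lim_seq (fun n => ln (Gamma_p n s)) (ln (Gamma s)).
Proof.
  intros Hs. destruct (Gamma_core s Hs) as [H1 H2].
  apply is_lim_seq_continuous; auto.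
  apply continuity_pt_filterlim. apply continuous_ln. auto.
Qed.

Lemma D_bounds t h : 1 < t -> 0 < h <= 1 ->
  h * (1 - / t - euler_gamma) <= ln (Gamma (t+h)) - ln (Gamma t) <=
  h * (ln (Gamma (t+1)) - ln (Gamma t)).
Proof.
  intros Ht Hh.
  assert (LD : is_lim_seq (fun n => ln (Gamma_p n (t+h)) - ln (Gamma_p n t)) (ln (Gamma (t+h)) - ln (Gamma t))).
  { apply (is_lim_seq_minus _ _ (ln (Gamma (t+h))) (ln (Gamma t))).
    apply lnG_lim; lra. apply lnG_lim; lra. reflexivity. }
  split.
  - assert (LL : is_lim_seq (fun n => h * (1 - / t - vE (S n) - / INR n)) (h * (1 - / t - euler_gamma - 0))).
    { apply (is_lim_seq_scal_l _ h (1 - / t - euler_gamma - 0)).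
      apply (is_lim_seq_minus _ _ (1 - /t - euler_gamma) 0).
      apply (is_lim_seq_minus _ _ (1 - /t) euler_gamma). apply is_lim_seq_const.
      apply (is_lim_seq_incr_1 vE). apply vE_lim. reflexivity.
      replace (Finite 0) with (Rbar_inv p_infty) by reflexivity.
      apply is_lim_seq_inv. apply is_lim_seq_INR. discriminate. reflexivity. }
    assert (EV : eventually (fun n => h * (1 - / t - vE (S n) - / INR n) <= ln (Gamma_p n (t+h)) - ln (Gamma_p n t)))
      by (exists 1%nat; intros n Hn; apply Dn_lower; auto; lra).
    pose proof (is_lim_seq_le_loc _ _ _ _ EV LL LD).
    simpl in H. lra.
  - assert (LU : is_lim_seq (fun n => h * (ln (Gamma_p n (t+1)) - ln (Gamma_p n t))) (h * (ln (Gamma (t+1)) - ln (Gamma t)))).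
    { apply (is_lim_seq_scal_l _ h (ln (Gamma (t+1)) - ln (Gamma t))).
      apply (is_lim_seq_minus _ _ (ln (Gamma (t+1))) (ln (Gamma t))).
      apply lnG_lim; lra. apply lnG_lim; lra. reflexivity. }
    assert (EV : eventually (fun n => ln (Gamma_p n (t+h)) - ln (Gamma_p n t) <= h * (ln (Gamma_p n (t+1)) - ln (Gamma_p n t))))
      by (exists 1%nat; intros n Hn; apply Dn_upper; auto; lra).
    pose proof (is_lim_seq_le_loc _ _ _ _ EV LD LU).
    simpl in H. lra.
Qed.

Lemma dq_bounds t h : 1 < t -> 0 < h <= 1 ->
  let M := ln (Gamma (t+1)) - ln (Gamma t) in
  Gamma t * (1 - / t - euler_gamma) <= (Gamma (t + h) - Gamma t) / h <= Gamma t * (Rabs M * exp (Rabs M)).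
Proof.
  intros Ht Hh M.
  destruct (Gamma_core t ltac:(lra)) as [_ G0].
  destruct (Gamma_core (t+h) ltac:(lra)) as [_ G1].
  pose proof (D_bounds t h Ht Hh) as [D1 D2]. fold M in D2.
  set (D := ln (Gamma (t+h)) - ln (Gamma t)) in *.
  assert (E : Gamma (t+h) = Gamma t * exp D).
  { unfold D, Rminus. rewrite exp_plus, exp_Ropp, !exp_ln by auto. field. lra. }
  rewrite E.
  replace ((Gamma t * exp D - Gamma t) / h) with (Gamma t * ((exp D - 1) / h)) by (field; lra).
  split; apply Rmult_le_compat_l; try lra.
  - pose proof (exp_ineq1_le D).
    apply Rmult_le_reg_r with h. lra. unfold Rdiv. rewrite Rmult_assoc, Rinv_l by lra. nra.
  - assert (exp D <= exp (h * M)) by (apply exp_le_3 || (destruct (Rle_lt_or_eq_dec _ _ D2) as [l|e]; [left; apply exp_increasing; auto | right; rewrite e; auto])).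
    pose proof (exp_ineq1_le (- (h*M))). rewrite exp_Ropp in H0.
    pose proof (exp_pos (h*M)).
    assert (exp (h*M) - 1 <= h * M * exp (h*M)).
    { apply Rmult_le_reg_r with (/ exp (h*M)). apply Rinv_0_lt_compat; auto.
      field_simplify; try lra. 
      assert (1 - h*M <= / exp (h*M)) by lra.
      apply Rmult_le_reg_r with (exp (h*M)); auto. field_simplify; try lra.
      assert ((1 - h*M) * exp (h*M) <= / exp (h*M) * exp (h*M)) by (apply Rmult_le_compat_r; lra).
      rewrite Rinv_l in H3 by lra. nra. }
    assert (M * exp (h*M) <= Rabs M * exp (Rabs M)).
    { assert (exp (h*M) <= exp (Rabs M)).
      { destruct (Rle_lt_or_eq_dec (h*M) (Rabs M)) as [l|e].
        { destruct (Rle_dec 0 M). rewrite Rabs_pos_eq by lra. nra. rewrite Rabs_left by lra. nra. }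
        left; apply exp_increasing; auto. rewrite e; lra. }
      pose proof (Rle_abs M). pose proof (Rabs_pos M). nra. }
    apply Rmult_le_reg_r with h. lra. unfold Rdiv. rewrite Rmult_assoc, Rinv_l by lra. nra.
Qed.

Lemma digamma_lower t : 1 < t -> 1 - / t - euler_gamma <= digamma t.
Proof.
  intros Ht. destruct (Gamma_core t ltac:(lra)) as [_ G0].
  set (M := ln (Gamma (t+1)) - ln (Gamma t)).
  set (u := fun n => (Gamma (t + (0 + / (INR n + 1))) - Gamma t) / (0 + / (INR n + 1))).
  assert (B : forall n, Gamma t * (1 - / t - euler_gamma) <= u n <= Gamma t * (Rabs M * exp (Rabs M))).
  { intros n. unfold u. rewrite Rplus_0_l. apply dq_bounds; auto.
    pose proof (pos_INR n). split. apply Rinv_0_lt_compat; lra.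
    rewrite <- Rinv_1. apply Rinv_le_contravar; lra. }
  assert (L1 : Rbar_le (Gamma t * (1 - / t - euler_gamma)) (Lim_seq u)).
  { rewrite <- (Lim_seq_const (Gamma t * (1 - / t - euler_gamma))).
    apply Lim_seq_le_loc. exists 0%nat. intros n _. apply B. }
  assert (L2 : Rbar_le (Lim_seq u) (Gamma t * (Rabs M * exp (Rabs M)))).
  { rewrite <- (Lim_seq_const (Gamma t * (Rabs M * exp (Rabs M)))).
    apply Lim_seq_le_loc. exists 0%nat. intros n _. apply B. }
  unfold digamma, Derive, Lim. simpl Rbar_loc_seq. fold u.
  destruct (Lim_seq u) as [r| |]; simpl in L1, L2; try contradiction.
  simpl. apply Rmult_le_reg_r with (Gamma t); auto.
  unfold Rdiv. rewrite Rmult_assoc, Rinv_l by lra. lra.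
Qed.

Theorem lemma3p1 (a b : R) (p : nat) (t : R) :
  0 < a -> 0 < b -> (1 <= p)%nat -> 1 < t ->
  a * euler_gamma + b * ln (INR p) + a * digamma t - b * psi_p p t > 0.
Proof.
  intros Ha Hb Hp Ht.
  rewrite psi_p_val by (auto; lra).
  pose proof (digamma_lower t Ht).
  assert (0 < sum_f_R0 (fun k => / (t + INR k)) p).
  { clear -Ht. induction p. simpl. apply Rinv_0_lt_compat; lra.
    rewrite tech5. assert (0 < / (t + INR (S p))) by (apply Rinv_0_lt_compat; pose proof (pos_INR (S p)); lra). lra. }
  assert (0 < 1 - / t).
  { assert (/ t < 1). { rewrite <- Rinv_1. apply Rinv_lt_contravar; lra. } lra. }
  assert (a * (1 - / t) <= a * (euler_gamma + digamma t)) by (apply Rmult_le_compat_l; lra).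
  nra.
Qed.
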